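(* For every $n\ge1$, the cloaktic monoid $\mathcal K_n$ satisfies every semigroup identity that is satisfied by the monoid $\mathrm{TMat}_n(\mathbb T)$ of $n\times n$ upper triangular tropical matrices under tropical multiplication.
   Context: $\mathcal A_n=\{a_1<\cdots<a_n\}$. For $w\in\mathcal A_n^*$ and $1\le i\le j\le n$, $L_{[i,j]}(w)$ is the maximal length of a nondecreasing (not necessarily contiguous) subword of $w$ with all letters in $\{a_i,\dots,a_j\}$ ($0$ if none); $u\equiv_{\mathrm{clk}}v$ iff $L_{[i,j]}(u)=L_{[i,j]}(v)$ for all $i\le j$, and $\mathcal K_n=\mathcal A_n^*/{\equiv_{\mathrm{clk}}}$. Tropical semiring $\mathbb T=\mathbb R\cup\{-\infty\}$ with $\max$ as addition and $+$ as multiplication; $\mathrm{TMat}_n(\mathbb T)$ consists of the matrices with entries $-\infty$ below the diagonal, with product $(A\odot B)_{i,j}=\max_t(a_{i,t}+b_{t,j})$. A semigroup identity is a formal equality $u=v$ of two distinct nonempty words over a set of variables; a semigroup $S$ satisfies it if $\varphi(u)=\varphi(v)$ for every semigroup homomorphism $\varphi$ from the free semigroup on the variables to $S$. *)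

(* Defs.v *)
From Stdlib Require Import Reals.
From mathcomp Require Import all_boot.
Set Implicit Arguments. Unset Strict Implicit. Unset Printing Implicit Defensive.

(* The value of a nonempty
   word x :: w under an assignment f of the variables is the product
   f x * f w_1 * ... * f w_k (this is the image of the word under the unique
   semigroup homomorphism from the free semigroup extending f). *)
Definition word_eval (S : Type) (op : S -> S -> S) (f : nat -> S) (x : nat)
  (w : seq nat) : S := foldl (fun a z => op a (f z)) (f x) w.

(* The semigroup given by the carrier {s : S | P s}, the (associative,
   P-closed) operation op, and the equality eqS, satisfies the identity u = v. *)
Definition satisfies (S : Type) (P : S -> Prop) (eqS : S -> S -> Prop)
  (op : S -> S -> S) (u v : seq nat) : Prop :=
  forall f : nat -> S, (forall x, P (f x)) ->
    match u, v with
    | x :: u', y :: v' => eqS (word_eval op f x u') (word_eval op f y v')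
    | _, _ => True
    end.

Definition is_identity (u v : seq nat) : Prop :=
  [/\ u != [::], v != [::] & u != v].

(* Letters a_1 < ... < a_n are represented by 'I_n (a_k = k-1). *)
(* L_[i,j](w): maximal length of a nondecreasing subword of w with all letters
   in {a_i, ..., a_j} (0 if none); i, j are given as 0-based nat indices. *)
Definition Lij (n : nat) (i j : nat) (w : seq 'I_n) : nat :=
  \max_(m : (size w).-tuple bool |
          sorted (fun a b : 'I_n => (a <= b)%N) (mask m w)
          && all (fun a : 'I_n => (i <= a <= j)%N) (mask m w))
     size (mask m w).

Definition clk_equiv (n : nat) (u v : seq 'I_n) : Prop :=
  forall i j : 'I_n, (i <= j)%N -> Lij i j u = Lij i j v.

(* K_n = A_n^* / clk_equiv, with product induced by concatenation. *)
Definition K_satisfies (n : nat) (u v : seq nat) : Prop :=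
  satisfies (fun _ : seq 'I_n => True) (@clk_equiv n) (@cat 'I_n) u v.

(* T = R ∪ {-oo}, with None = -oo. *)
Definition trop := option R.

Definition tadd (a b : trop) : trop :=
  match a, b with
  | None, _ => b
  | _, None => a
  | Some x, Some y => Some (Rmax x y)
  end.

Definition tmul (a b : trop) : trop :=
  match a, b with
  | Some x, Some y => Some (Rplus x y)
  | _, _ => None
  end.

Definition tmat (n : nat) := 'I_n -> 'I_n -> trop.

Definition tmat_mul (n : nat) (A B : tmat n) : tmat n :=
  fun i j => \big[tadd/None]_(t < n) tmul (A i t) (B t j).

Definition upper_tri (n : nat) (A : tmat n) : Prop :=
  forall i j : 'I_n, (j < i)%N -> A i j = None.

Definition tmat_eq (n : nat) (A B : tmat n) : Prop := forall i j, A i j = B i j.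

Definition TMat_satisfies (n : nat) (u v : seq nat) : Prop :=
  satisfies (@upper_tri n) (@tmat_eq n) (@tmat_mul n) u v.

(* Main.v *)
Require Import Defs.
From Stdlib Require Import Reals.
From mathcomp Require Import all_boot.
Set Implicit Arguments. Unset Strict Implicit.

Section Comb.
Variable n : nat.
Definition ordle : rel 'I_n := fun a b : 'I_n => (a <= b)%N.
Definition good (i j : nat) (s : seq 'I_n) :=
  sorted (fun a b : 'I_n => (a <= b)%N) s && all (fun a : 'I_n => (i <= a <= j)%N) s.

Lemma ordle_trans : transitive ordle.
Proof. by move=> b a c; rewrite /ordle; apply: leq_trans. Qed.

Lemma Lij_ge i j (w s : seq 'I_n) : subseq s w -> good i j s -> size s <= Lij i j w.
Proof.
case/subseqP=> m Hm -> Hg.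
have Hm' : size m == size w by apply/eqP.
exact: (@leq_bigmax_cond _ _ (fun m0 : (size w).-tuple bool => size (mask m0 w)) (Tuple Hm')).
Qed.

Lemma Lij_att i j (w : seq 'I_n) : exists s, [/\ subseq s w, good i j s & size s = Lij i j w].
Proof.
pose P := (fun m : (size w).-tuple bool => sorted (fun a b : 'I_n => (a <= b)%N) (mask m w)
          && all (fun a : 'I_n => (i <= a <= j)%N) (mask m w)).
have P0 : P (nseq_tuple (size w) false) by rewrite /P /= mask_false.
rewrite /Lij (bigmax_eq_arg _ P0).
case: arg_maxnP => // m Pm _.
exists (mask m w); split => //.
by apply/subseqP; exists m => //; rewrite size_tuple.
Qed.

Lemma sorted_cat_mid (t : nat) (s1 s2 : seq 'I_n) :
  sorted ordle s1 -> sorted ordle s2 -> all (fun a : 'I_n => a <= t) s1 ->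
  all (fun a : 'I_n => t <= a) s2 -> sorted ordle (s1 ++ s2).
Proof.
case: s1 => [//|x s1] H1 H2 A1 A2.
rewrite /= cat_path; apply/andP; split; first exact: H1.
case: s2 H2 A2 => [//|y s2] /= -> /andP[Hy _]; rewrite andbT.
rewrite /ordle; apply: leq_trans Hy.
exact: (allP A1 _ (mem_last x s1)).
Qed.

Lemma Lcat_ge i j (t : nat) (w1 w2 : seq 'I_n) : i <= t <= j -> Lij i t w1 + Lij t j w2 <= Lij i j (w1 ++ w2).
Proof.
case/andP => it tj.
have [s1 [S1 G1 E1]] := Lij_att i t w1.
have [s2 [S2 G2 E2]] := Lij_att t j w2.
rewrite -E1 -E2 -size_cat; apply: Lij_ge; first exact: cat_subseq.
move: G1 G2 => /andP[So1 A1] /andP[So2 A2]; apply/andP; split.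
  apply: (@sorted_cat_mid t) => //.
    by apply/allP => a /(allP A1) /andP[].
  by apply/allP => a /(allP A2) /andP[].
rewrite all_cat; apply/andP; split; apply/allP => a.
  by move/(allP A1) => /andP[ia at']; rewrite ia /= (leq_trans at' tj).
by move/(allP A2) => /andP[ta aj]; rewrite aj andbT (leq_trans it ta).
Qed.

Lemma subseq_cat_split (s w1 w2 : seq 'I_n) : subseq s (w1 ++ w2) ->
  exists s1 s2, [/\ s = s1 ++ s2, subseq s1 w1 & subseq s2 w2].
Proof.
case/subseqP => m Hm ->.
exists (mask (take (size w1) m) w1), (mask (drop (size w1) m) w2); split;
  idtac.
rewrite -mask_cat ?cat_take_drop //.
by rewrite size_takel // Hm size_cat leq_addr.
all: exact: mask_subseq.
Qed.

Lemma Lcat_le i j (w1 w2 : seq 'I_n) : i <= j -> j < n ->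
  exists t : 'I_n, i <= t <= j /\ Lij i j (w1 ++ w2) <= Lij i t w1 + Lij t j w2.
Proof.
move=> ij jn.
have [s [S G E]] := Lij_att i j (w1 ++ w2).
have [s1 [s2 [Es S1 S2]]] := subseq_cat_split S.
subst s.
move: G => /andP[So A]; rewrite all_cat in A; case/andP: A => A1 A2.
have [So1 So2] := cat_sorted2 So.
case E2: s2 => [|y s2'].
  exists (Ordinal jn); rewrite /= ij leqnn; split => //.
  rewrite -E size_cat E2 addn0; apply: leq_trans (leq_addr _ _).
  by apply: Lij_ge => //; apply/andP.
have Hy : i <= y <= j by apply: (allP A2); rewrite E2 mem_head.
exists y; split => //.
rewrite -E size_cat leq_add //; apply: Lij_ge => //; apply/andP; split => //.
  apply/allP => a Ha; have /andP[ia _] := allP A1 a Ha; rewrite ia /=.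
  move: So; rewrite (sorted_pairwise ordle_trans) pairwise_cat => /andP[/allrelP H _].
  by apply: (H a y Ha); rewrite E2 mem_head.
apply/allP => b Hb; have /andP[_ bj] := allP A2 b Hb; rewrite bj andbT.
move: Hb; rewrite E2 inE => /orP[/eqP -> //|Hb].
move: So2; rewrite E2 /= => /(order_path_min ordle_trans) /allP; exact.
Qed.

Definition Mword (w : seq 'I_n) : tmat n :=
  fun i j => if (i <= j)%N then Some (INR (Lij i j w)) else None.

Lemma big_tadd_none (I : Type) (r : seq I) (F : I -> trop) :
  (forall t, F t = None) -> \big[tadd/None]_(t <- r) F t = None.
Proof.
move=> H; apply: (big_rec (fun a => a = None)) => // t a _ ->.
by rewrite H.
Qed.

Lemma big_tadd_inv (I : Type) (r : seq I) (F : I -> trop) c :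
  (forall t, F t = None \/ exists x, F t = Some x /\ (Rle x c)) ->
  let B := \big[tadd/None]_(t <- r) F t in
  B = None \/ exists x, B = Some x /\ (Rle x c).
Proof.
move=> H; apply: (big_rec (fun a => a = None \/ exists x, a = Some x /\ (Rle x c))); first by left.
move=> t a _ Ha; case: (H t) => [->|[x [-> Hx]]] //=.
case: Ha => [->|[y [-> Hy]]] /=; first by right; exists x.
right; exists (Rmax x y); split => //; exact: Rmax_lub.
Qed.

Lemma big_tadd_spec (I : eqType) (r : seq I) (F : I -> trop) c :
  (forall t, F t = None \/ exists x, F t = Some x /\ (Rle x c)) ->
  (exists2 t, t \in r & F t = Some c) ->
  \big[tadd/None]_(t <- r) F t = Some c.
Proof.
move=> H; elim: r => [[t]//|t r IH] Ht; rewrite big_cons /=.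
case: Ht => t'; rewrite inE => /orP[/eqP ->|Ht'] Ft'.
  rewrite Ft'.
  case: (big_tadd_inv r H) => [->|[y [-> Hy]]] //=.
  by rewrite Rmax_left.
rewrite IH; last by exists t'.
case: (H t) => [->|[x [-> Hx]]] //=.
by rewrite Rmax_right.
Qed.

Lemma Mword_cat (w1 w2 : seq 'I_n) :
  tmat_eq (Mword (w1 ++ w2)) (tmat_mul (Mword w1) (Mword w2)).
Proof.
move=> i j; rewrite /tmat_mul /Mword.
case: (leqP i j) => ij.
  symmetry; apply: big_tadd_spec.
    move=> t; case: ifP => it; case: ifP => tj /=; try by left.
    right; eexists; split; first reflexivity.
    rewrite -plus_INR; apply: le_INR; apply/leP; apply: Lcat_ge; by rewrite it tj.
  have [t [Ht Hle]] := Lcat_le w1 w2 ij (ltn_ord j).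
  exists t; first exact: mem_index_enum.
  case/andP: Ht => it tj; rewrite it tj /=.
  rewrite -plus_INR; congr (Some (INR _)).
  apply/eqP; rewrite eqn_leq; apply/andP; split; last exact: Hle.
  by apply: Lcat_ge; rewrite it tj.
symmetry; apply: big_tadd_none => t.
case: ifP => it; case: ifP => tj //.
by move: (leq_trans it tj); rewrite leqNgt ij.
Qed.

Lemma tmul_congr (A A' B B' : tmat n) : tmat_eq A A' -> tmat_eq B B' ->
  tmat_eq (tmat_mul A B) (tmat_mul A' B').
Proof.
move=> HA HB i j; rewrite /tmat_mul; apply: eq_bigr => t _; by rewrite HA HB.
Qed.

Lemma eval_hom (f : nat -> seq 'I_n) x u :
  tmat_eq (Mword (word_eval (@cat 'I_n) f x u))
          (word_eval (@tmat_mul n) (fun z => Mword (f z)) x u).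
Proof.
rewrite /word_eval.
suff H : forall acc Acc, tmat_eq (Mword acc) Acc ->
  tmat_eq (Mword (foldl (fun a z => a ++ f z) acc u))
          (foldl (fun A z => tmat_mul A (Mword (f z))) Acc u) by apply: H.
elim: u => [|z u IH] acc Acc H /=; first by [].
apply: IH => i j.
rewrite (Mword_cat acc (f z) i j).
exact: (tmul_congr H (fun _ _ => erefl) i j).
Qed.
End Comb.

Theorem mainTheorem8 (n : nat) (u v : seq nat) :
  (1 <= n)%N -> is_identity u v ->
  TMat_satisfies n u v -> K_satisfies n u v.
Proof.
rewrite /K_satisfies /TMat_satisfies /satisfies => _ _ Htm f _.
case: u Htm => [|x u'] Htm //; case: v Htm => [|y v'] Htm //.
have Hup : forall z, upper_tri (Mword (f z)).
  by move=> z i j ji; rewrite /Mword leqNgt ji.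
have Heq := Htm (fun z => Mword (f z)) Hup.
move=> i j ij.
have := Heq i j.
rewrite -(eval_hom f x u' i j) -(eval_hom f y v' i j) /Mword ij.
by case=> /INR_eq.
Qed.
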